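(* Let $\mu=(d_1,d_2,\dots)$ be a sequence of positive integers and let $\{R_i\mid i\in I\}$ be a collection of $*$-regular subrings of $\mathcal{M}^{alg}_\mu$. Then $\bigcap_{i\in I}R_i$ is also a $*$-regular subring of $\mathcal{M}^{alg}_\mu$.
   Context: A ring is von Neumann regular if every principal right ideal is generated by an idempotent; a $*$-regular ring is a regular ring with involution in which $a^*a=0$ implies $a=0$; a $*$-regular subring is a subring closed under the involution which is itself $*$-regular. Fix a nonprincipal ultrafilter $\omega$ on $\mathbb{N}$. Let $\mathcal{J}$ be the ideal of $\prod_n\mathrm{Mat}_{d_n\times d_n}(\mathbb{C})$ consisting of sequences $(a_n)$ with $\lim_\omega\mathrm{rank}(a_n)/d_n=0$, and $\mathcal{M}^{alg}_\mu=\prod_n\mathrm{Mat}_{d_n\times d_n}(\mathbb{C})/\mathcal{J}$ with involution induced by coordinatewise conjugate transpose. *)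

(* Defs.v *)
From HB Require Import structures.
From mathcomp Require Import all_boot all_order all_algebra.
From mathcomp Require Import boolp classical_sets filter reals Rstruct.
From mathcomp Require Import complex.
Set Implicit Arguments. Unset Strict Implicit. Unset Printing Implicit Defensive.
Import Order.TTheory GRing.Theory Num.Theory.
Local Open Scope ring_scope.
Local Open Scope classical_set_scope.

Definition Rr : rcfType := Rdefinitions.R.
Notation CC := (complex Rr).

Definition nonprincipal_ultrafilter (om : set_system nat) : Prop :=
  UltraFilter om /\ (\oo `<=` om).

Section MatSeq.
Variable d : nat -> nat.

Definition MatSeq := forall n : nat, 'M[CC]_(d n).

Definition ms_zero : MatSeq := fun n => 0.
Definition ms_one : MatSeq := fun n => 1%:M.
Definition ms_add (a b : MatSeq) : MatSeq := fun n => a n + b n.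
Definition ms_opp (a : MatSeq) : MatSeq := fun n => - a n.
Definition ms_mul (a b : MatSeq) : MatSeq := fun n => a n *m b n.
Definition ms_adj (a : MatSeq) : MatSeq := fun n => (map_mx Num.conj (a n))^T.

Definition ulim0 (om : set_system nat) (x : nat -> Rr) : Prop :=
  forall eps : Rr, 0 < eps -> om [set n | `|x n| < eps].

Definition Jideal (om : set_system nat) (a : MatSeq) : Prop :=
  ulim0 om (fun n => (\rank (a n))%:R / (d n)%:R).

(* equality in M^alg_mu = prod / J *)
Definition meq (om : set_system nat) (a b : MatSeq) : Prop :=
  Jideal om (ms_add a (ms_opp b)).

(* A subset of M^alg_mu is represented by its preimage in the product,
   i.e. a J-saturated predicate S on MatSeq (S a means "the class of a is in S"). *)
Definition saturated (om : set_system nat) (S : MatSeq -> Prop) : Prop :=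
  forall a b, meq om a b -> S a -> S b.

Definition star_subring (om : set_system nat) (S : MatSeq -> Prop) : Prop :=
  saturated om S /\ S ms_one /\ S ms_zero /\
      (forall a b, S a -> S b -> S (ms_add a b)) /\
      (forall a, S a -> S (ms_opp a)) /\
      (forall a b, S a -> S b -> S (ms_mul a b)) /\
      (forall a, S a -> S (ms_adj a)).

(* von Neumann regular: every principal right ideal aS is generated by an
   idempotent e of S, i.e. aS = eS, i.e. a in eS and e in aS. *)
Definition regular_sub (om : set_system nat) (S : MatSeq -> Prop) : Prop :=
  forall a, S a -> exists e, [/\ S e, meq om (ms_mul e e) e,
     (exists y, S y /\ meq om a (ms_mul e y)) &
     (exists z, S z /\ meq om e (ms_mul a z))].

Definition star_regular_subring (om : set_system nat) (S : MatSeq -> Prop) : Prop :=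
  [/\ star_subring om S, regular_sub om S &
      (forall a, S a -> meq om (ms_mul (ms_adj a) a) ms_zero -> meq om a ms_zero)].

End MatSeq.

(* Main.v *)
Require Import Defs.
From HB Require Import structures.
From mathcomp Require Import all_boot all_order all_algebra.
From mathcomp Require Import boolp classical_sets filter reals Rstruct complex.
From Stdlib Require Import FunctionalExtensionality.
Set Implicit Arguments. Unset Strict Implicit. Unset Printing Implicit Defensive.
Import Order.TTheory GRing.Theory Num.Theory.
Local Open Scope ring_scope.
Local Open Scope classical_set_scope.
From Stdlib Require Setoid.

Lemma J_le d (om : set_system nat) (hF : Filter om) (a c : MatSeq d) :
  (forall n, \rank (c n) <= \rank (a n))%N -> Jideal om a -> Jideal om c.
Proof.
move=> hle ha eps he; apply: filterS (ha eps he) => n /=.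
have hd : 0 <= ((d n)%:R : Rr)^-1 by rewrite invr_ge0 ler0n.
rewrite !ger0_norm ?divr_ge0 ?ler0n //.
apply: le_lt_trans; apply: ler_wpM2r => //; by rewrite ler_nat.
Qed.

Lemma J_add2 d (om : set_system nat) (hF : Filter om) (a b c : MatSeq d) :
  (forall n, \rank (c n) <= \rank (a n) + \rank (b n))%N ->
  Jideal om a -> Jideal om b -> Jideal om c.
Proof.
move=> hle ha hb eps he.
have he2 : 0 < eps / 2 by rewrite divr_gt0.
apply: filterS (filterI (ha _ he2) (hb _ he2)) => n /= [].
have hd : 0 <= ((d n)%:R : Rr)^-1 by rewrite invr_ge0 ler0n.
rewrite !ger0_norm ?divr_ge0 ?ler0n // => h1 h2.
apply: (@le_lt_trans _ _ ((\rank (a n))%:R / (d n)%:R + (\rank (b n))%:R / (d n)%:R)).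
  rewrite -mulrDl -natrD; apply: ler_wpM2r => //; by rewrite ler_nat.
by rewrite (splitr eps); apply: ltrD.
Qed.

Lemma J_zero d (om : set_system nat) (hF : Filter om) : Jideal om (ms_zero d).
Proof.
move=> eps he; apply: filterS (@filterT _ _ hF) => n _ /=.
by rewrite /ms_zero mxrank0 mul0r normr0.
Qed.

Lemma J_rank0 d (om : set_system nat) (hF : Filter om) (c : MatSeq d) :
  (forall n, \rank (c n) = 0)%N -> Jideal om c.
Proof. by move=> h; apply: (J_le hF (a := ms_zero d)) (J_zero d hF) => n; rewrite h. Qed.

Lemma adjE d (a : MatSeq d) n : ms_adj a n = (a n)^t*%sesqui.
Proof. by rewrite /ms_adj map_trmx. Qed.

Lemma rank_adj n (A : 'M[CC]_n) : \rank (A^t*%sesqui) = \rank A.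
Proof. by rewrite mxrank_map mxrank_tr. Qed.

Lemma adjmxM n (A B : 'M[CC]_n) : ((A *m B)^t*)%sesqui = (B^t* *m A^t*)%sesqui.
Proof. by rewrite trmx_mul map_mxM. Qed.

Lemma adjmxD n (A B : 'M[CC]_n) : ((A + B)^t*)%sesqui = (A^t* + B^t*)%sesqui.
Proof. by rewrite linearD /= map_mxD. Qed.

Lemma adjmxN n (A : 'M[CC]_n) : ((- A)^t*)%sesqui = (- A^t*)%sesqui.
Proof. by rewrite linearN /= map_mxN. Qed.

Record UFl := { ufs :> set_system nat; ufF : Filter ufs }.

Local Notation "a ⊕ b" := (ms_add a b) (at level 50, left associativity).
Local Notation "⊖ a" := (ms_opp a) (at level 35).
Local Notation "a ⊗ b" := (ms_mul a b) (at level 40, left associativity).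
Local Notation "a ⋆" := (ms_adj a) (at level 2, format "a ⋆").
Local Notation "a ≡[ U ] b" := (meq U a b) (at level 70).

Lemma meq_refl d (U : UFl) (a : MatSeq d) : a ≡[U] a.
Proof. by rewrite /meq; apply: (J_rank0 (ufF U)) => n; rewrite /ms_add /ms_opp addrN mxrank0. Qed.

Lemma meq_sym d (U : UFl) (a b : MatSeq d) : a ≡[U] b -> b ≡[U] a.
Proof. by rewrite /meq; apply: (J_le (ufF U)) => n; rewrite /ms_add /ms_opp -opprB mxrank_opp. Qed.

Lemma meq_trans d (U : UFl) (a b c : MatSeq d) : a ≡[U] b -> b ≡[U] c -> a ≡[U] c.
Proof.
rewrite /meq; apply: (J_add2 (ufF U)) => n; rewrite /ms_add /ms_opp.
have -> : a n - c n = (a n - b n) + (b n - c n) by rewrite addrA subrK.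
exact: mxrank_add.
Qed.

Add Parametric Relation d (U : UFl) : (MatSeq d) (@meq d U)
  reflexivity proved by (@meq_refl d U)
  symmetry proved by (@meq_sym d U)
  transitivity proved by (@meq_trans d U) as meq_rel.

Add Parametric Morphism d (U : UFl) : (@ms_add d)
  with signature (Morphisms.respectful (@meq d U) (Morphisms.respectful (@meq d U) (@meq d U))) as add_mor.
Proof.
move=> a b h1 c e h2; rewrite /meq in h1 h2 *; apply: (J_add2 (ufF U)) h1 h2 => n.
by rewrite /ms_add /ms_opp opprD addrACA mxrank_add.
Qed.

Add Parametric Morphism d (U : UFl) : (@ms_opp d)
  with signature (Morphisms.respectful (@meq d U) (@meq d U)) as opp_mor.
Proof.
move=> a b h1; rewrite /meq in h1 *; apply: (J_le (ufF U)) h1 => n.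
by rewrite /ms_add /ms_opp -opprD mxrank_opp.
Qed.

Add Parametric Morphism d (U : UFl) : (@ms_mul d)
  with signature (Morphisms.respectful (@meq d U) (Morphisms.respectful (@meq d U) (@meq d U))) as mul_mor.
Proof.
move=> a b h1 c e h2; rewrite /meq in h1 h2 *; apply: (J_add2 (ufF U)) h1 h2 => n.
rewrite /ms_add /ms_opp /ms_mul.
have -> : a n *m c n - b n *m e n = (a n - b n) *m c n + b n *m (c n - e n).
  by rewrite mulmxBl mulmxBr addrA subrK.
apply: leq_trans (mxrank_add _ _) _; apply: leq_add.
  exact: mxrankM_maxl.
exact: mxrankM_maxr.
Qed.

Add Parametric Morphism d (U : UFl) : (@ms_adj d)
  with signature (Morphisms.respectful (@meq d U) (@meq d U)) as adj_mor.
Proof.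
move=> a b h1; rewrite /meq in h1 *; apply: (J_le (ufF U)) h1 => n.
by rewrite /ms_add /ms_opp !adjE -adjmxN -adjmxD rank_adj.
Qed.

Ltac fe := apply: functional_extensionality_dep => n.

Lemma mulA d (a b c : MatSeq d) : a ⊗ (b ⊗ c) = a ⊗ b ⊗ c.
Proof. by fe; rewrite /ms_mul mulmxA. Qed.
Lemma mulDl d (a b c : MatSeq d) : (a ⊕ b) ⊗ c = a ⊗ c ⊕ b ⊗ c.
Proof. by fe; rewrite /ms_mul /ms_add mulmxDl. Qed.
Lemma mulDr d (a b c : MatSeq d) : c ⊗ (a ⊕ b) = c ⊗ a ⊕ c ⊗ b.
Proof. by fe; rewrite /ms_mul /ms_add mulmxDr. Qed.
Lemma mulNl d (a c : MatSeq d) : (⊖ a) ⊗ c = ⊖ (a ⊗ c).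
Proof. by fe; rewrite /ms_mul /ms_opp mulNmx. Qed.
Lemma mulNr d (a c : MatSeq d) : c ⊗ (⊖ a) = ⊖ (c ⊗ a).
Proof. by fe; rewrite /ms_mul /ms_opp mulmxN. Qed.
Lemma mul0l d (a : MatSeq d) : ms_zero d ⊗ a = ms_zero d.
Proof. by fe; rewrite /ms_mul /ms_zero mul0mx. Qed.
Lemma mul0r d (a : MatSeq d) : a ⊗ ms_zero d = ms_zero d.
Proof. by fe; rewrite /ms_mul /ms_zero mulmx0. Qed.
Lemma mul1l d (a : MatSeq d) : ms_one d ⊗ a = a.
Proof. by fe; rewrite /ms_mul /ms_one mul1mx. Qed.
Lemma mul1r d (a : MatSeq d) : a ⊗ ms_one d = a.
Proof. by fe; rewrite /ms_mul /ms_one mulmx1. Qed.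
Lemma addN d (a : MatSeq d) : a ⊕ ⊖ a = ms_zero d.
Proof. by fe; rewrite /ms_add /ms_opp /ms_zero addrN. Qed.
Lemma add0l d (a : MatSeq d) : ms_zero d ⊕ a = a.
Proof. by fe; rewrite /ms_add /ms_zero add0r. Qed.
Lemma add0r d (a : MatSeq d) : a ⊕ ms_zero d = a.
Proof. by fe; rewrite /ms_add /ms_zero addr0. Qed.
Lemma opp0 d : ⊖ (ms_zero d) = ms_zero d.
Proof. by fe; rewrite /ms_opp /ms_zero oppr0. Qed.
Lemma adjK d (a : MatSeq d) : a⋆⋆ = a.
Proof. by fe; rewrite !adjE trmxCK. Qed.
Lemma adjM d (a b : MatSeq d) : (a ⊗ b)⋆ = b⋆ ⊗ a⋆.
Proof. by fe; rewrite /ms_mul !adjE adjmxM. Qed.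
Lemma adjD d (a b : MatSeq d) : (a ⊕ b)⋆ = a⋆ ⊕ b⋆.
Proof. by fe; rewrite /ms_add !adjE adjmxD. Qed.
Lemma adjN d (a : MatSeq d) : (⊖ a)⋆ = ⊖ a⋆.
Proof. by fe; rewrite /ms_opp !adjE adjmxN. Qed.
Lemma adj0 d : (ms_zero d)⋆ = ms_zero d.
Proof. by fe; rewrite /ms_zero adjE trmx0 map_mx0. Qed.

Definition MP d (U : UFl) (a x : MatSeq d) : Prop :=
  [/\ a ⊗ x ⊗ a ≡[U] a, x ⊗ a ⊗ x ≡[U] x, (a ⊗ x)⋆ ≡[U] a ⊗ x & (x ⊗ a)⋆ ≡[U] x ⊗ a].

Lemma MP_unique d (U : UFl) (a x y : MatSeq d) : MP U a x -> MP U a y -> x ≡[U] y.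
Proof.
case=> H1x H2x H3x H4x [H1y H2y H3y H4y].
have e1 : x ≡[U] x ⊗ a ⊗ y.
  transitivity (x ⊗ x⋆ ⊗ a⋆).
    transitivity (x ⊗ a ⊗ x); first by symmetry.
    by rewrite -mulA -H3x adjM mulA; reflexivity.
  transitivity (x ⊗ x⋆ ⊗ (a⋆ ⊗ y⋆ ⊗ a⋆)).
    have h : (a ⊗ y ⊗ a)⋆ = a⋆ ⊗ y⋆ ⊗ a⋆ by rewrite !adjM mulA.
    by rewrite -h H1y; reflexivity.
  transitivity (x ⊗ (a ⊗ x)⋆ ⊗ (a ⊗ y)⋆); first by rewrite !adjM !mulA; reflexivity.
  by rewrite H3x H3y !mulA H2x; reflexivity.
have e2 : y ≡[U] x ⊗ a ⊗ y.
  transitivity ((y ⊗ a)⋆ ⊗ y); first by rewrite H4y; symmetry.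
  transitivity ((y ⊗ (a ⊗ x ⊗ a))⋆ ⊗ y); first by rewrite H1x; reflexivity.
  transitivity ((x ⊗ a)⋆ ⊗ (y ⊗ a)⋆ ⊗ y); first by rewrite !adjM !mulA; reflexivity.
  rewrite H4x H4y -(mulA (x ⊗ a) (y ⊗ a) y) H2y; reflexivity.
by rewrite e1 -e2; reflexivity.
Qed.

Lemma sub0_meq d (U : UFl) (a b : MatSeq d) : a ⊕ ⊖ b ≡[U] ms_zero d -> a ≡[U] b.
Proof.
rewrite /meq; apply: (J_le (ufF U)) => n.
by rewrite /ms_add /ms_opp /ms_zero oppr0 addr0.
Qed.

Lemma ctxL d (U : UFl) (p q : MatSeq d) : p ≡[U] q -> forall L, L ⊗ p ≡[U] L ⊗ q.
Proof. by move=> h L; rewrite h; reflexivity. Qed.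

Section Exist.
Lemma MP_exists d (U : UFl) (S : MatSeq d -> Prop) :
  star_regular_subring U S -> forall a, S a -> exists x, S x /\ MP U a x.
Proof.
case=> hs reg prop; move: hs; rewrite /star_subring => [[sat [S1 [S0 [Sadd [Sopp [Smul Sadj]]]]]]].
have inner : forall b, S b -> exists z, S z /\ b ⊗ z ⊗ b ≡[U] b.
  move=> b Sb; have [e [Se He [y [Sy Hy]] [z [Sz Hz]]]] := reg b Sb.
  exists z; split => //.
  rewrite -Hz. rewrite {2}Hy. rewrite Hy mulA He; reflexivity.
have sinner : forall b, S b -> b⋆ = b -> exists w, [/\ S w, w⋆ = w & b ⊗ w ⊗ b ≡[U] b].
  move=> b Sb hb; have [w0 [Sw0 H]] := inner b Sb.
  exists (w0 ⊗ b ⊗ w0⋆); split.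
  - by apply: (Smul); [apply: (Smul) | apply: (Sadj)].
  - by rewrite !adjM adjK hb mulA.
  - have -> : b ⊗ (w0 ⊗ b ⊗ w0⋆) ⊗ b = b ⊗ w0 ⊗ b ⊗ w0⋆ ⊗ b by rewrite !mulA.
    rewrite H.
    have -> : b ⊗ w0⋆ ⊗ b = (b ⊗ w0 ⊗ b)⋆ by rewrite !adjM hb mulA.
    by rewrite H hb; reflexivity.
have F4 : forall a, S a -> forall w, S w -> w⋆ = w -> (a⋆ ⊗ a) ⊗ w ⊗ (a⋆ ⊗ a) ≡[U] a⋆ ⊗ a ->
    a ≡[U] a ⊗ w ⊗ (a⋆ ⊗ a).
  move=> a Sa w Sw hw Hc; apply: sub0_meq.
  set c := a⋆ ⊗ a in Hc *.
  set u := a ⊕ ⊖ (a ⊗ w ⊗ c).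
  have Su : S u.
    apply: (Sadd) => //; apply: (Sopp); apply: (Smul); first by apply: (Smul).
    by rewrite /c; apply: (Smul) => //; apply: (Sadj).
  apply: (prop) => //.
  have hc : c⋆ = c by rewrite /c adjM adjK.
  have hv : a⋆ ⊗ u ≡[U] ms_zero d.
    rewrite /u mulDr mulNr !mulA -/c.
    rewrite -(mulA (c ⊗ w)) -/c Hc addN; reflexivity.
  have -> : u⋆ ⊗ u = a⋆ ⊗ u ⊕ ⊖ (c ⊗ w ⊗ (a⋆ ⊗ u)).
    by rewrite {1}/u adjD adjN adjM hc adjM hw mulDl mulNl !mulA.
  by rewrite hv mul0r opp0 add0r; reflexivity.
move=> a Sa.
have Sb : S (a ⊗ a⋆) by apply: (Smul) => //; apply: (Sadj).
have Sc : S (a⋆ ⊗ a) by apply: (Smul) => //; apply: (Sadj).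
have hb' : (a ⊗ a⋆)⋆ = a ⊗ a⋆ by rewrite adjM adjK.
have [z [Sz hz Hz]] := sinner _ Sb hb'.
have hc' : (a⋆ ⊗ a)⋆ = a⋆ ⊗ a by rewrite adjM adjK.
have [w [Sw hw Hw]] := sinner _ Sc hc'.
have P2 : a ≡[U] a ⊗ w ⊗ a⋆ ⊗ a by rewrite {1}(F4 a Sa w Sw hw Hw) !mulA; reflexivity.
have P1 : a ≡[U] a ⊗ a⋆ ⊗ z ⊗ a.
  have Sa' : S a⋆ by apply: (Sadj).
  have Hz' : a⋆⋆ ⊗ a⋆ ⊗ z ⊗ (a⋆⋆ ⊗ a⋆) ≡[U] a⋆⋆ ⊗ a⋆ by rewrite adjK.
  have h := F4 _ Sa' z Sz hz Hz'.
  transitivity (a⋆⋆); first by rewrite adjK; reflexivity.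
  rewrite {1}h !adjM !adjK hz !mulA; reflexivity.
have P1L : forall L, L ⊗ a ≡[U] L ⊗ a ⊗ a⋆ ⊗ z ⊗ a.
  by move=> L; have := ctxL P1 L; rewrite !mulA.
have P2L : forall L, L ⊗ a ≡[U] L ⊗ a ⊗ w ⊗ a⋆ ⊗ a.
  by move=> L; have := ctxL P2 L; rewrite !mulA.
exists (a⋆ ⊗ z ⊗ a ⊗ w ⊗ a⋆); split.
  apply: (Smul); last by apply: (Sadj).
  apply: (Smul) => //; apply: (Smul) => //; apply: (Smul) => //; by apply: (Sadj).
have hax : a ⊗ (a⋆ ⊗ z ⊗ a ⊗ w ⊗ a⋆) ≡[U] a ⊗ w ⊗ a⋆.
  by rewrite !mulA -P1; reflexivity.
have hxa : a⋆ ⊗ z ⊗ a ⊗ w ⊗ a⋆ ⊗ a ≡[U] a⋆ ⊗ z ⊗ a.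
  by rewrite -P2L; reflexivity.
split.
- by rewrite hax -P2; reflexivity.
- by rewrite !mulA -P2L -P1L; reflexivity.
- by rewrite hax !adjM adjK hw mulA; reflexivity.
- by rewrite hxa !adjM adjK hz mulA; reflexivity.
Qed.
End Exist.

Lemma adjmx0 m n (K : 'M[CC]_(m, n)) : K *m (K^t*)%sesqui = 0 -> K = 0.
Proof.
move=> h; apply/matrixP => i j.
have := congr1 (fun M : 'M_m => M i i) h; rewrite !mxE => hs.
have hs' : \sum_k K i k * (K i k)^* = 0.
  by apply: etrans hs; apply: eq_bigr => k _; rewrite !mxE.
have := psumr_eq0P (fun k _ => mul_conjC_ge0 (K i k)) hs' (isT : predT j).
move=> h0; apply/eqP; rewrite -mul_conjC_eq0; exact/eqP.
Qed.

Lemma rank_adjA n (A : 'M[CC]_n) : \rank ((A^t*)%sesqui *m A) = \rank A.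
Proof.
rewrite -[RHS](rank_adj A); apply/mxrank_injP.
set B := (_ :&: _)%MS.
have hBk : B *m A = 0 by apply/sub_kermxP; exact: capmxSr.
have /submxP [D hD] : (B <= (A^t*)%sesqui)%MS by exact: capmxSl.
apply/eqP; apply: adjmx0.
by rewrite {2}hD adjmxM trmxCK mulmxA hBk mul0mx.
Qed.

Lemma ambient_srs d (U : UFl) : star_regular_subring U (fun _ : MatSeq d => True).
Proof.
split.
- by do !split.
- move=> a _; pose p : MatSeq d := fun n => pinvmx (a n).
  have hapa : a ⊗ p ⊗ a = a by fe; rewrite /ms_mul /p mulmxKpV.
  exists (a ⊗ p); split => //.
  + by rewrite (mulA (a ⊗ p) a p) hapa; reflexivity.
  + by exists a; split => //; rewrite hapa; reflexivity.
  + by exists p; split => //; reflexivity.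
- move=> a _; rewrite /meq => h; apply: (J_le (ufF U)) h => n.
  by rewrite /ms_add /ms_opp /ms_zero /ms_mul !oppr0 !addr0 adjE rank_adjA.
Qed.

Theorem mainTheorem3 (om : set_system nat) (hom : nonprincipal_ultrafilter om)
  (d : nat -> nat) (hd : forall n, (0 < d n)%N)
  (I : Type) (R : I -> MatSeq d -> Prop)
  (hR : forall i, star_regular_subring om (R i)) :
  star_regular_subring om (fun a => forall i, R i a).
Proof.
have hF : Filter om by case: hom => h _; exact: _.
pose U := Build_UFl hF.
change (star_regular_subring U (fun a => forall i, R i a)).
have hR' : forall i, star_regular_subring U (R i) by [].
have sub : forall i, star_subring U (R i) by move=> i; case: (hR' i).
split.
- split.
    by move=> a b hab ha i; case: (sub i) => s _; exact: s a b hab (ha i).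
  split; first by move=> i; case: (sub i) => _ [].
  split; first by move=> i; case: (sub i) => _ [_ []].
  split; first by move=> a b ha hb i; case: (sub i) => _ [_ [_ [h _]]]; exact: h.
  split; first by move=> a ha i; case: (sub i) => _ [_ [_ [_ [h _]]]]; exact: h.
  split; first by move=> a b ha hb i; case: (sub i) => _ [_ [_ [_ [_ [h _]]]]]; exact: h.
  by move=> a ha i; case: (sub i) => _ [_ [_ [_ [_ [_ h]]]]]; exact: h.
- move=> a ha.
  have [x [_ hx]] := @MP_exists d U _ (ambient_srs d U) a Logic.I.
  have Rx : forall i, R i x.
    move=> i; have [xi [Rxi hxi]] := MP_exists (hR' i) (ha i).
    case: (sub i) => s _; apply: s Rxi; exact: MP_unique hxi hx.
  case: hx => H1 H2 H3 H4.
  exists (a ⊗ x); split.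
  + by move=> i; case: (sub i) => _ [_ [_ [_ [_ [h _]]]]]; exact: h.
  + by rewrite (mulA (a ⊗ x) a x) H1; reflexivity.
  + by exists a; split => //; symmetry.
  + by exists x; split => //; reflexivity.
- move=> a _; case: (ambient_srs d U) => _ _ h; exact: h.
Qed.
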